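(* Let $P_1,\dots,P_\ell$ and $P'_1,\dots,P'_\ell$ be transition matrices on the finite set $S$, all reversible with respect to $\pi$ (not necessarily irreducible). Let $a_1,\dots,a_\ell>0$ with $\sum_k a_k=1$, and set $P=\sum_{k=1}^\ell a_kP_k$ and $P'=\sum_{k=1}^\ell a_kP'_k$. If $P$ and $P'$ are irreducible, and for each $k$ the eigenvalues of $P_k-P'_k$ (equivalently, of $D(P_k-P'_k)$ with $D=\mathrm{diag}(\pi)$) are all non-negative, then $P'$ efficiency-dominates $P$.
   Context: $S$ is a finite set with $|S|=n$, identified with $\{1,\dots,n\}$, and $\pi$ is a probability distribution on $S$ with $\pi(x)>0$ for all $x$; $D=\mathrm{diag}(\pi(1),\dots,\pi(n))$. A transition matrix $P$ is reversible with respect to $\pi$ if $\pi(x)P(x,y)=\pi(y)P(y,x)$ for all $x,y$; irreducible if every state can be reached from every other with positive probability in some number of steps. For a Markov chain $X_1,X_2,\dots$ with transition matrix $P$ and $X_1\sim\pi$, $v(f,P)=\lim_{N\to\infty}\frac1N\mathrm{Var}\big(\sum_{i=1}^N f(X_i)\big)$. $P$ efficiency-dominates $Q$ if $v(f,P)\le v(f,Q)$ for all $f:S\to\mathbb R$. *)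

(* Defs.v *)
From HB Require Import structures.
From mathcomp Require Import all_boot all_order all_algebra.
From mathcomp Require Import all_classical all_reals topology normedtype sequences.
Set Implicit Arguments. Unset Strict Implicit. Unset Printing Implicit Defensive.
Import Order.TTheory GRing.Theory Num.Theory numFieldNormedType.Exports.
Local Open Scope ring_scope.

Section Markov.
Variable R : realType.
Variable n : nat.

Definition is_pos_distribution (pi : 'I_n -> R) : Prop :=
  (forall x, 0 < pi x) /\ \sum_(x < n) pi x = 1.

Definition is_transition (P : 'M[R]_n) : Prop :=
  (forall x y, 0 <= P x y) /\ (forall x, \sum_(y < n) P x y = 1).

Definition reversible (pi : 'I_n -> R) (P : 'M[R]_n) : Prop :=
  forall x y, pi x * P x y = pi y * P y x.

Definition irreducible (P : 'M[R]_n) : Prop :=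
  forall x y, exists k : nat, 0 < (P ^+ k) x y.

(* Law of the path (X_1, ..., X_{N+1}) of the chain started from pi. *)
Definition path_weight (pi : 'I_n -> R) (P : 'M[R]_n) (N : nat)
  (x : {ffun 'I_N.+1 -> 'I_n}) : R :=
  pi (x ord0) * \prod_(i < N) P (x (inord i)) (x (inord i.+1)).

Definition path_expect (pi : 'I_n -> R) (P : 'M[R]_n) (N : nat)
  (g : {ffun 'I_N.+1 -> 'I_n} -> R) : R :=
  \sum_(x : {ffun 'I_N.+1 -> 'I_n}) path_weight pi P x * g x.

Definition path_sum (f : 'I_n -> R) (N : nat) (x : {ffun 'I_N.+1 -> 'I_n}) : R :=
  \sum_(i < N.+1) f (x i).

Definition var_sum (pi : 'I_n -> R) (P : 'M[R]_n) (f : 'I_n -> R) (N : nat) : R :=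
  path_expect pi P (fun x : {ffun 'I_N.+1 -> 'I_n} => path_sum f x ^+ 2)
  - (path_expect pi P (fun x : {ffun 'I_N.+1 -> 'I_n} => path_sum f x)) ^+ 2.

(* v(f,P) = lim_{N -> oo} (1/N) Var(sum_{i=1}^N f(X_i))
   (sequence indexed from N+1 = 1, which does not change the limit). *)
Definition asym_var (pi : 'I_n -> R) (f : 'I_n -> R) (P : 'M[R]_n) : R :=
  limn (fun N : nat => var_sum pi P f N / N.+1%:R).

Definition efficiency_dominates (pi : 'I_n -> R) (P Q : 'M[R]_n) : Prop :=
  forall f : 'I_n -> R, asym_var pi f P <= asym_var pi f Q.

End Markov.

(* Main.v *)
Require Import Defs.
From HB Require Import structures.
From mathcomp Require Import all_boot all_order all_algebra.
From mathcomp Require Import all_classical all_reals topology normedtype sequences.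
From mathcomp Require Import ring lra zify.
From mathcomp Require Import sesquilinear spectral.
From mathcomp.real_closed Require Import complex.
Set Implicit Arguments. Unset Strict Implicit. Unset Printing Implicit Defensive.
Import Order.TTheory GRing.Theory Num.Theory numFieldNormedType.Exports.
Local Open Scope ring_scope.

Section Herm.
Variable C : numClosedFieldType.

Lemma herm_psd n (A : 'M[C]_n) : A \is hermsymmx ->
  (forall d, d \is Num.real -> eigenvalue A d -> 0 <= d) ->
  forall v : 'rV_n, 0 <= (v *m A *m map_mx Num.conj (v^T)) 0 0.
Proof.
move=> hA pos v.
set P := spectralmx A; set d := spectral_diag A.
have /orthomx_spectralP eA := hermitian_normalmx hA.
have Pu : P \is unitarymx := spectral_unitarymx A.
have Pun : P \in unitmx := spectral_unit A.
have dre := hermitian_spectral_diag_real hA.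
have dpos : forall i, 0 <= d 0 i.
  move=> i; apply: pos; first by move/mxOverP: dre; apply.
  apply/eigenvalueP; exists (row i P).
    by rewrite {1}eA rowE !mulmxA mulmxK // -(rowE i (diag_mx _)) row_diag_mx scalemxAl.
  apply/negP => /eqP h0.
  have : row i P *m invmx P = 0 by rewrite h0 mul0mx.
  rewrite rowE mulmxK // => /matrixP /(_ 0 i); rewrite !mxE !eqxx /= => /eqP.
  by rewrite oner_eq0.
rewrite {1}eA invmx_unitary //.
set w := v *m map_mx Num.conj (P^T).
have ew : P *m map_mx Num.conj (v^T) = map_mx Num.conj (w^T).
  rewrite /w trmx_mul map_mxM; congr (_ *m _).
  by rewrite -map_trmx trmxK -map_mx_comp (map_mx_id (@conjCK _)).
rewrite !mulmxA -(mulmxA _ P) ew -/w.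
rewrite mul_mx_diag !mxE sumr_ge0 // => j _; rewrite !mxE.
by rewrite mulrAC mulr_ge0 // mul_conjC_ge0.
Qed.
End Herm.

Lemma real_sym_psd (R : rcfType) n (S : 'M[R]_n) : S^T = S ->
  (forall lam, eigenvalue S lam -> 0 <= lam) ->
  forall v : 'rV_n, 0 <= (v *m S *m v^T) 0 0.
Proof.
move=> sS pos v.
pose f := real_complex R.
have fr : forall x : R, Num.conj (f x) = f x.
  by move=> x; apply: conj_Creal; rewrite /f complex_real.
have cf : forall m p (M : 'M[R]_(m, p)), map_mx Num.conj (map_mx f M) = map_mx f M.
  by move=> m p M; apply/matrixP => i j; rewrite !mxE fr.
have hA : map_mx f S \is hermsymmx.
  by apply/is_hermitianmxP; rewrite expr0 scale1r map_trmx cf sS.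
have hp : forall d, d \is Num.real -> eigenvalue (map_mx f S) d -> 0 <= d.
  move=> d /complex_realP [k ->]; rewrite (eigenvalue_map f) ler0c; exact: pos.
have := herm_psd hA hp (map_mx f v).
by rewrite map_trmx cf -!map_mxM mxE ler0c.
Qed.

Section Main.
Variable R : realType.
Variable n : nat.
Variable pi : 'I_n -> R.
Hypothesis pipos : forall x, 0 < pi x.
Hypothesis pisum : \sum_(x < n) pi x = 1.

Definition ip (u v : 'I_n -> R) := \sum_(x < n) pi x * u x * v x.
Definition app (P : 'M[R]_n) (h : 'I_n -> R) := fun x => \sum_(y < n) P x y * h y.

Lemma ipC u v : ip u v = ip v u.
Proof. by apply: eq_bigr => x _; ring. Qed.

Lemma ipDl u v w : ip (fun x => u x + v x) w = ip u w + ip v w.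
Proof. by rewrite /ip -big_split; apply: eq_bigr => x _ /=; ring. Qed.

Lemma ipBl u v w : ip (fun x => u x - v x) w = ip u w - ip v w.
Proof. by rewrite /ip -sumrB; apply: eq_bigr => x _ /=; ring. Qed.

Lemma ipZl c u w : ip (fun x => c * u x) w = c * ip u w.
Proof. by rewrite /ip mulr_sumr; apply: eq_bigr => x _ /=; ring. Qed.

Lemma ipDr u v w : ip w (fun x => u x + v x) = ip w u + ip w v.
Proof. by rewrite ipC ipDl ![ip _ w]ipC. Qed.

Lemma ipBr u v w : ip w (fun x => u x - v x) = ip w u - ip w v.
Proof. by rewrite ipC ipBl ![ip _ w]ipC. Qed.

Lemma ip_ext u u' v v' : u =1 u' -> v =1 v' -> ip u v = ip u' v'.
Proof. by move=> eu ev; apply: eq_bigr => x _; rewrite eu ev. Qed.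

Lemma appB P u v : app P (fun x => u x - v x) =1 (fun x => app P u x - app P v x).
Proof. by move=> x; rewrite /app -sumrB; apply: eq_bigr => y _; ring. Qed.

Lemma app_ext P u v : u =1 v -> app P u =1 app P v.
Proof. by move=> e x; apply: eq_bigr => y _; rewrite e. Qed.


Section LimH.
Local Open Scope classical_set_scope.
Lemma lim_helper (u : nat -> R) V C : (forall N, `|u N - V| <= C / N.+1%:R) -> limn u = V.
Proof.
move=> hb; apply: cvg_lim; first exact: norm_hausdorff.
have h0 : (fun N => C * harmonic N) @ \oo --> (0 : R).
  rewrite -(mulr0 C); apply: cvgM; [exact: cvg_cst | exact: cvg_harmonic].
have L : (fun N => V - C * harmonic N) @ \oo --> V.
  rewrite -[X in _ --> X]subr0; apply: cvgB => //; exact: cvg_cst.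
have U : (fun N => V + C * harmonic N) @ \oo --> V.
  rewrite -[X in _ --> X]addr0; apply: cvgD => //; exact: cvg_cst.
have hn : \forall N \near \oo, V - C * harmonic N <= u N <= V + C * harmonic N.
  by apply: nearW => N; have := hb N; rewrite ler_distl.
  exact: (squeeze_cvgr hn L U).
Qed.
End LimH.


Section Chain.
Variable P : 'M[R]_n.
Hypothesis Pt : is_transition P.
Hypothesis Pr : reversible pi P.

Lemma Pnn x y : 0 <= P x y. Proof. by case: Pt. Qed.
Lemma Psum x : \sum_(y < n) P x y = 1. Proof. by case: Pt. Qed.

Lemma stat y : \sum_(x < n) pi x * P x y = pi y.
Proof.
under eq_bigr => x _ do rewrite Pr.
by rewrite -mulr_sumr Psum mulr1.
Qed.

Lemma app_cst c : app P (fun _ => c) =1 (fun _ => c).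
Proof. by move=> x; rewrite /app -mulr_suml Psum mul1r. Qed.

Lemma selfadj u v : ip (app P u) v = ip u (app P v).
Proof.
rewrite /ip /app.
transitivity (\sum_(x < n) \sum_(y < n) pi y * P y x * u y * v x).
  apply: eq_bigr => x _; rewrite mulr_sumr mulr_suml; apply: eq_bigr => y _.
  rewrite -Pr; ring.
rewrite exchange_big; apply: eq_bigr => y _ /=.
rewrite mulr_sumr; apply: eq_bigr => x _; ring.
Qed.

Lemma psdA h : 0 <= ip h h - ip h (app P h).
Proof.
have e1 : \sum_(x < n) \sum_(y < n) pi x * P x y * h x ^+ 2 = ip h h.
  apply: eq_bigr => x _; rewrite -mulr_suml -mulr_sumr Psum; ring.
have e2 : \sum_(x < n) \sum_(y < n) pi x * P x y * h y ^+ 2 = ip h h.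
  rewrite exchange_big; apply: eq_bigr => y _ /=.
  by rewrite -mulr_suml stat; ring.
have e3 : \sum_(x < n) \sum_(y < n) pi x * P x y * (h x * h y) = ip h (app P h).
  apply: eq_bigr => x _; rewrite mulr_sumr; apply: eq_bigr => y _; ring.
have : 0 <= \sum_(x < n) \sum_(y < n) pi x * P x y * (h x - h y) ^+ 2.
  apply: sumr_ge0 => x _; apply: sumr_ge0 => y _.
  by rewrite mulr_ge0 ?sqr_ge0 // mulr_ge0 // ?Pnn // ltW.
have -> : \sum_(x < n) \sum_(y < n) pi x * P x y * (h x - h y) ^+ 2 =
   \sum_(x < n) \sum_(y < n) pi x * P x y * h x ^+ 2
 + \sum_(x < n) \sum_(y < n) pi x * P x y * h y ^+ 2
 - 2 * \sum_(x < n) \sum_(y < n) pi x * P x y * (h x * h y).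
  rewrite -big_split /= mulr_sumr -sumrB; apply: eq_bigr => x _.
  rewrite -big_split /= mulr_sumr -sumrB; apply: eq_bigr => y _; ring.
rewrite e1 e2 e3 => H.
have : 0 <= 2 * (ip h h - ip h (app P h)) by lra.
by rewrite pmulr_rge0.
Qed.


Lemma pi_neq0 x : pi x != 0. Proof. by rewrite gt_eqF. Qed.

Lemma revdiv x y : P y x / pi x = P x y / pi y.
Proof.
have e := Pr y x.
have hx := pi_neq0 x; have hy := pi_neq0 y.
apply: (mulfI hy); rewrite mulrA e; field; by rewrite hx hy.
Qed.

Lemma Pk_prop k : (forall x y, 0 <= (P ^+ k) x y) /\ (forall x, \sum_(y < n) (P ^+ k) x y = 1).
Proof.
elim: k => [|k [IH1 IH2]].
  rewrite expr0; split=> [x y|x]; first by rewrite mxE ler0n.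
  by rewrite (bigD1 x) //= big1 ?mxE ?eqxx ?addr0 // => y; rewrite mxE eq_sym => /negPf ->.
split=> [x y|x].
  by rewrite exprS -mulmxE mxE sumr_ge0 // => z _; rewrite mulr_ge0 ?Pnn.
rewrite exprS -mulmxE.
under eq_bigr => y _ do rewrite mxE.
rewrite exchange_big /=.
under eq_bigr => z _ do rewrite -mulr_sumr IH2 mulr1.
exact: Psum.
Qed.

Lemma Pk_fix h k : app P h =1 h -> app (P ^+ k) h =1 h.
Proof.
move=> fx; elim: k => [|k IH] x.
  rewrite /app expr0 (bigD1 x) //= big1 ?mxE ?eqxx ?addr0 ?mul1r // => y.
  by rewrite mxE eq_sym => /negPf ->; rewrite mul0r.
rewrite /app exprS -mulmxE.
under eq_bigr => y _ do rewrite mxE mulr_suml.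
rewrite exchange_big /=.
rewrite -(fx x) /app; apply: eq_bigr => z _.
rewrite -(IH z) /app mulr_sumr; apply: eq_bigr => i _; by rewrite mulrA.
Qed.

Lemma maxp h : irreducible P -> app P h =1 h -> forall x y, h x = h y.
Proof.
move=> irr fx x.
case: (@arg_maxP _ _ _ x xpredT h isT) => x0 _ hmax.
suff H : forall y, h y = h x0 by move=> y; rewrite !H.
move=> y; have [k hk] := irr x0 y.
have [Pk1 Pk2] := Pk_prop k.
have e : \sum_(z < n) (P ^+ k) x0 z * (h x0 - h z) = 0.
  under eq_bigr => z _ do rewrite mulrBr.
  rewrite sumrB -mulr_suml Pk2 mul1r.
  by have := Pk_fix k fx x0; rewrite /app => ->; rewrite subrr.
have /psumr_eq0P H : forall z, true -> 0 <= (P ^+ k) x0 z * (h x0 - h z).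
  by move=> z _; rewrite mulr_ge0 // subr_ge0; apply: hmax.
have := H e y isT => /eqP; rewrite mulf_eq0 (gt_eqF hk) /= subr_eq0 => /eqP.
by move=> ->.
Qed.

Lemma n_gt0 : (0 < n)%N.
Proof.
case: (pickP (fun _ : 'I_n => true)) => [x _|h0]; first exact: leq_ltn_trans (leq0n _) (ltn_ord x).
move: pisum; rewrite big1 => [/eqP|x]; first by rewrite eq_sym oner_eq0.
by have := h0 x.
Qed.

Lemma poisson f : irreducible P -> \sum_(x < n) pi x * f x = 0 ->
  exists g : 'I_n -> R, forall x, g x - app P g x = f x.
Proof.
move=> irr f0.
pose M : 'M[R]_n := 1%:M - P.
pose Ones : 'M[R]_(n, 1) := const_mx 1.
pose w : 'rV[R]_n := \row_x (pi x * f x).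
have hM1 : M *m Ones = 0.
  apply/matrixP => i j; rewrite /M mulmxBl mul1mx !mxE.
  under eq_bigr => k _ do rewrite mxE mulr1.
  by rewrite Psum subrr.
have hw1 : w *m Ones = 0.
  apply/matrixP => i j; rewrite !mxE.
  under eq_bigr => k _ do rewrite !mxE mulr1.
  exact: f0.
have sub1 : (M <= kermx Ones)%MS by apply/sub_kermxP.
have subw : (w <= kermx Ones)%MS by apply/sub_kermxP.
have rkO : (1 <= \rank Ones)%N.
  rewrite lt0n mxrank_eq0; apply/eqP => /matrixP /(_ (Ordinal n_gt0) 0).
  by rewrite !mxE => /eqP; rewrite oner_eq0.
pose pirow : 'rV[R]_n := \row_x pi x.
have kerM : (kermx M <= pirow)%MS.
  apply/row_subP => i; set r := row i (kermx M).
  have hr : r *m M = 0 by rewrite /r -row_mul mulmx_ker row0.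
  have hr' : forall y, \sum_(x < n) r 0 x * P x y = r 0 y.
    move=> y; move/matrixP: hr => /(_ 0 y).
    rewrite /M mulmxBr mulmx1 !mxE => /eqP; rewrite subr_eq0 => /eqP <-.
    by apply: eq_bigr.
  pose h x := r 0 x / pi x.
  have fx : app P h =1 h.
    move=> x; rewrite /app /h -hr' mulr_suml; apply: eq_bigr => y _.
    by rewrite mulrA [P x y * _]mulrC -mulrA revdiv mulrA.
  have -> : r = (h (Ordinal n_gt0)) *: pirow.
    by apply/rowP => y; rewrite [RHS]mxE [pirow _ _]mxE (maxp irr fx (Ordinal n_gt0) y) /h divfK ?pi_neq0.
  exact/scalemx_sub/submx_refl.
have rkK : (\rank (kermx M) <= 1)%N.
  exact: leq_trans (mxrankS kerM) (rank_leq_row pirow).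
have rkM : (\rank (kermx Ones) <= \rank M)%N.
  rewrite !mxrank_ker.
  have := rank_leq_row M; move: rkK; rewrite mxrank_ker; lia.
have subO : (kermx Ones <= M)%MS.
  rewrite -(mxrank_leqif_sup sub1).2 eqn_leq rkM andbT; exact: mxrankS.
have /submxP [u hu] := submx_trans subw subO.
exists (fun x => u 0 x / pi x) => y.
have := congr1 (fun A : 'rV[R]_n => A 0 y) hu; rewrite /M mulmxBr mulmx1 !mxE => e.
rewrite /app.
have -> : \sum_(x < n) P y x * (u 0 x / pi x) = (\sum_(x < n) u 0 x * P x y) / pi y.
  rewrite mulr_suml; apply: eq_bigr => x _.
  by rewrite mulrA [P y x * _]mulrC -mulrA revdiv mulrA.
rewrite -mulrBl -e mulrAC divff ?mul1r //; exact: pi_neq0.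
Qed.

Section Paths.

Definition ext N (x : {ffun 'I_N.+1 -> 'I_n}) (y : 'I_n) : {ffun 'I_N.+2 -> 'I_n} :=
  [ffun i => if unlift ord_max i is Some j then x j else y].

Definition res N (z : {ffun 'I_N.+2 -> 'I_n}) : {ffun 'I_N.+1 -> 'I_n} :=
  [ffun j => z (lift ord_max j)].

Lemma ext_max N x y : @ext N x y ord_max = y.
Proof. by rewrite ffunE unlift_none. Qed.

Lemma ext_lt N x y (i : 'I_N.+2) : (i < N.+1)%N -> @ext N x y i = x (inord i).
Proof.
move=> hi; rewrite ffunE; case: unliftP => [j ->|e].
  have hj : (lift ord_max j : nat) = j := lift_max j.
  by congr (x _); rewrite hj inord_val.
by move: hi; rewrite e /= ltnn.
Qed.

Lemma sum_ffun1 (F : {ffun 'I_1 -> 'I_n} -> R) :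
  \sum_x F x = \sum_(y < n) F [ffun _ => y].
Proof.
rewrite (reindex (fun y : 'I_n => [ffun _ : 'I_1 => y])) //.
exists (fun x : {ffun 'I_1 -> 'I_n} => x ord0) => [y _|x _]; first by rewrite ffunE.
by apply/ffunP => i; rewrite ffunE (ord1 i).
Qed.

Lemma sum_ffunS N (F : {ffun 'I_N.+2 -> 'I_n} -> R) :
  \sum_z F z = \sum_x \sum_(y < n) F (@ext N x y).
Proof.
rewrite pair_big /=.
rewrite (reindex (fun p : {ffun 'I_N.+1 -> 'I_n} * 'I_n => ext p.1 p.2)) //.
exists (fun z => (res z, z ord_max)) => [[x y] _|z _] /=.
  rewrite ext_max; congr (_, _); apply/ffunP => j.
  by rewrite !ffunE liftK.
apply/ffunP => i; rewrite ffunE; case: unliftP => [j ->|->] //.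
by rewrite ffunE.
Qed.

Lemma pw_ext N x y :
  path_weight pi P (@ext N x y) = path_weight pi P x * P (x ord_max) y.
Proof.
rewrite /path_weight big_ord_recr /= mulrA; congr (_ * _ * _).
- by rewrite ext_lt //; congr (pi (x _)); apply: val_inj; rewrite /= inordK.
- apply: eq_bigr => i _.
  have hi := ltn_ord i.
  rewrite !ext_lt ?inordK //; lia.
- rewrite ext_lt ?inordK //; congr (P (x _) _).
    by apply: val_inj; rewrite /= !inordK.
  have -> : (inord N.+1 : 'I_N.+2) = ord_max by apply: val_inj; rewrite /= inordK.
  by rewrite ext_max.
Qed.

Lemma ps_ext (f : 'I_n -> R) N x y : path_sum f (@ext N x y) = path_sum f x + f y.
Proof.
rewrite /path_sum big_ord_recr /= ext_max; congr (_ + _).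
apply: eq_bigr => i _; rewrite ext_lt /=; last exact: ltn_ord.
by congr (f (x _)); apply: val_inj; rewrite /= inordK.
Qed.

Lemma expect0 G : @path_expect R n pi P 0 G = \sum_(y < n) pi y * G [ffun _ => y].
Proof.
rewrite /path_expect sum_ffun1; apply: eq_bigr => y _.
by rewrite /path_weight big_ord0 mulr1 ffunE.
Qed.

Lemma expectS N G : @path_expect R n pi P N.+1 G =
  \sum_x path_weight pi P x * \sum_(y < n) P (x ord_max) y * G (@ext N x y).
Proof.
rewrite /path_expect sum_ffunS; apply: eq_bigr => x _.
rewrite mulr_sumr; apply: eq_bigr => y _; rewrite pw_ext; ring.
Qed.

Lemma pexp_ext N (G H : {ffun 'I_N.+1 -> 'I_n} -> R) : G =1 H ->
  @path_expect R n pi P N G = @path_expect R n pi P N H.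
Proof. by move=> e; apply: eq_bigr => x _; rewrite e. Qed.

Lemma pexpD N (G H : {ffun 'I_N.+1 -> 'I_n} -> R) :
  @path_expect R n pi P N (fun x => G x + H x) = @path_expect R n pi P N G + @path_expect R n pi P N H.
Proof. by rewrite /path_expect -big_split; apply: eq_bigr => x _ /=; ring. Qed.

Lemma pexpZ N c (G : {ffun 'I_N.+1 -> 'I_n} -> R) :
  @path_expect R n pi P N (fun x => c * G x) = c * @path_expect R n pi P N G.
Proof. by rewrite /path_expect mulr_sumr; apply: eq_bigr => x _ /=; ring. Qed.

Lemma E1 N h : @path_expect R n pi P N (fun x => h (x ord_max)) = \sum_(y < n) pi y * h y.
Proof.
elim: N h => [|N IH] h.
  by rewrite expect0; apply: eq_bigr => y _; rewrite ffunE.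
rewrite expectS.
transitivity (@path_expect R n pi P N (fun x => app P h (x ord_max))).
  by apply: eq_bigr => x _; congr (_ * _); apply: eq_bigr => y _; rewrite ext_max.
rewrite IH /app.
under eq_bigr => y _ do rewrite mulr_sumr.
rewrite exchange_big /=; apply: eq_bigr => z _.
by rewrite -(stat z) mulr_suml; apply: eq_bigr => y _; ring.
Qed.

Lemma pexp1 N : @path_expect R n pi P N (fun _ => 1) = 1.
Proof.
transitivity (\sum_(y < n) pi y * 1); first exact: (E1 N (fun _ => 1)).
by under eq_bigr => y _ do rewrite mulr1.
Qed.

Variable f : 'I_n -> R.

Definition Tn N h := @path_expect R n pi P N (fun x => path_sum f x * h (x ord_max)).
Definition Qn N := @path_expect R n pi P N (fun x => path_sum f x ^+ 2).

Lemma T0 h : Tn 0 h = ip f h.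
Proof.
rewrite /Tn expect0; apply: eq_bigr => y _.
by rewrite /path_sum big_ord1 !ffunE; ring.
Qed.

Lemma TS N h : Tn N.+1 h = Tn N (app P h) + ip f h.
Proof.
rewrite /Tn expectS.
transitivity (@path_expect R n pi P N (fun x => path_sum f x * app P h (x ord_max)
   + app P (fun z => f z * h z) (x ord_max))).
  apply: eq_bigr => x _; congr (_ * _).
  rewrite /app mulr_sumr -big_split /=; apply: eq_bigr => y _.
  by rewrite ps_ext ext_max; ring.
rewrite pexpD E1; congr (_ + _).
rewrite /app.
under eq_bigr => y _ do rewrite mulr_sumr.
rewrite exchange_big /=; apply: eq_bigr => z _.
rewrite -(stat z) !mulr_suml; apply: eq_bigr => y _ /=; ring.
Qed.

Lemma Q0 : Qn 0 = ip f f.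
Proof.
rewrite /Qn expect0; apply: eq_bigr => y _.
by rewrite /path_sum big_ord1 !ffunE; ring.
Qed.

Lemma QS N : Qn N.+1 = Qn N + 2 * Tn N (app P f) + ip f f.
Proof.
rewrite /Qn expectS.
transitivity (@path_expect R n pi P N (fun x => path_sum f x ^+ 2 + 2 * (path_sum f x * app P f (x ord_max))
   + app P (fun z => f z * f z) (x ord_max))).
  apply: eq_bigr => x _; congr (_ * _).
  rewrite /app.
  transitivity (\sum_(y < n) (path_sum f x ^+ 2 * P (x ord_max) y + 2 * (path_sum f x * (P (x ord_max) y * f y)) + P (x ord_max) y * (f y * f y))).
    by apply: eq_bigr => y _; rewrite ps_ext; ring.
  by rewrite !big_split /= -mulr_sumr Psum -!mulr_sumr mulr1.
rewrite !pexpD pexpZ E1 /Tn; congr (_ + _).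
rewrite /app.
under eq_bigr => y _ do rewrite mulr_sumr.
rewrite exchange_big /=; apply: eq_bigr => z _.
rewrite -(stat z) !mulr_suml; apply: eq_bigr => y _ /=; ring.
Qed.

End Paths.

Lemma Tn_ext f N h h' : h =1 h' -> Tn f N h = Tn f N h'.
Proof. by move=> e; apply: pexp_ext => x; rewrite e. Qed.

Lemma Tn1 f N : \sum_(x < n) pi x * f x = 0 -> Tn f N (fun _ => 1) = 0.
Proof.
move=> f0; elim: N => [|N IH]; first by rewrite T0 -f0; apply: eq_bigr => x _; rewrite mulr1.
rewrite TS (Tn_ext _ _ (app_cst 1)) IH add0r -f0; apply: eq_bigr => x _; rewrite mulr1 //=.
Qed.

Lemma var_center f m N : var_sum pi P f N = var_sum pi P (fun x => f x - m) N.
Proof.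
set c := N.+1%:R * m.
have eS : forall x : {ffun 'I_N.+1 -> 'I_n}, path_sum (fun x => f x - m) x = path_sum f x - c.
  move=> x; rewrite /path_sum sumrB sumr_const card_ord /c mulr_natl //.
rewrite /var_sum; symmetry.
rewrite (pexp_ext (H := fun x => path_sum f x ^+ 2 + (-2 * c) * path_sum f x + c ^+ 2 * 1)); last first.
  by move=> x; rewrite eS; ring.
rewrite (pexp_ext (G := fun x => path_sum (fun y => f y - m) x) (H := fun x => path_sum f x + (- c) * 1)); last first.
  by move=> x; rewrite eS; ring.
rewrite !pexpD !pexpZ !pexp1; ring.
Qed.

Section Formula.
Variables f g : 'I_n -> R.
Hypothesis hg : forall x, g x - app P g x = f x.

Definition G k := iter k (app P) g.
Definition e k := ip (G k) g.

Lemma Pg x : app P g x = g x - f x.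
Proof. by rewrite -hg; ring. Qed.

Lemma Tform N h : Tn f N h = ip g h - ip (G N.+1) h.
Proof.
elim: N h => [|N IH] h.
  by rewrite T0 /= -ipBl; apply: ip_ext => // x; rewrite hg.
rewrite TS IH -selfadj.
have -> : ip (G N.+1) (app P h) = ip (G N.+2) h by rewrite -selfadj.
have -> : ip f h = ip g h - ip (app P g) h by rewrite -ipBl; apply: ip_ext => // x; rewrite hg.
ring.
Qed.

Lemma Qform N : Qn f N = N%:R * (2 * ip g f - ip f f) + ip f f - 2 * e 2 + 2 * e N.+2.
Proof.
elim: N => [|N IH]; first by rewrite Q0; ring.
rewrite QS IH Tform.
have -> : ip g (app P f) = ip g f - ip f f.
  by rewrite -selfadj -ipBl; apply: ip_ext => // x; rewrite Pg.
have -> : ip (G N.+1) (app P f) = e N.+2 - e N.+3.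
  rewrite -selfadj /e.
  have -> : ip (G N.+3) g = ip (G N.+2) (app P g) by rewrite -selfadj.
  by rewrite -ipBr; apply: ip_ext => // x; rewrite hg.
rewrite -[N.+1]addn1 natrD; ring.
Qed.

Definition K := \sum_(y < n) `|g y|.

Lemma Gbound k x : `|G k x| <= K.
Proof.
elim: k x => [|k IH] x.
  by rewrite /K (bigD1 x) //= lerDl sumr_ge0.
rewrite /= /app.
apply: le_trans (ler_norm_sum _ _ _) _.
apply: (@le_trans _ _ (\sum_(y < n) P x y * K)).
  apply: ler_sum => y _; rewrite normrM ger0_norm ?Pnn //.
  by apply: ler_wpM2l; [exact: Pnn | exact: IH].
by rewrite -mulr_suml Psum mul1r.
Qed.

Lemma ebound k : `|e k| <= K * K.
Proof.
rewrite /e /ip.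
apply: le_trans (ler_norm_sum _ _ _) _.
apply: (@le_trans _ _ (\sum_(x < n) pi x * (K * K))).
  apply: ler_sum => x _; rewrite !normrM (ger0_norm (ltW (pipos x))) -mulrA.
  apply: ler_wpM2l; first exact: ltW.
  apply: ler_pM => //; [exact: Gbound | exact: (Gbound 0)].
by rewrite -mulr_suml pisum mul1r.
Qed.

End Formula.

Lemma asym_formula f g : irreducible P -> (forall x, g x - app P g x = f x) ->
  \sum_(x < n) pi x * f x = 0 -> asym_var pi f P = 2 * ip g f - ip f f.
Proof.
move=> irr hg f0.
apply: (@lim_helper _ _ (`|ip f f - 2 * e g 2 - (2 * ip g f - ip f f)| + 2 * (K g * K g))) => N.
have hv : var_sum pi P f N = Qn f N.
  rewrite /var_sum.
  have -> : @path_expect R n pi P N (fun x => path_sum f x) = Tn f N (fun _ => 1).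
    by apply: pexp_ext => x; rewrite mulr1.
  by rewrite Tn1 // expr0n /= subr0.
rewrite hv (Qform hg).
have hN : N.+1%:R != 0 :> R by rewrite pnatr_eq0.
have -> : (N%:R * (2 * ip g f - ip f f) + ip f f - 2 * e g 2 + 2 * e g N.+2) / N.+1%:R
    - (2 * ip g f - ip f f)
  = ((ip f f - 2 * e g 2 - (2 * ip g f - ip f f)) + 2 * e g N.+2) / N.+1%:R.
  rewrite -[N.+1]addn1 natrD; field.
  by rewrite -(natrD R N 1) addn1.
have hinv : 0 <= (N.+1%:R : R)^-1 by rewrite invr_ge0 ler0n.
rewrite normrM (ger0_norm hinv).
apply: ler_wpM2r => //.
apply: le_trans (ler_normD _ _) _; apply: lerD => //.
by rewrite normrM ger0_norm ?ler0n // ler_wpM2l // ebound.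
Qed.

Lemma asym_center f m : asym_var pi f P = asym_var pi (fun x => f x - m) P.
Proof.
rewrite /asym_var.
have -> : (fun N => var_sum pi P f N / N.+1%:R) =
          (fun N => var_sum pi P (fun x => f x - m) N / N.+1%:R).
  by apply: boolp.funext => N; rewrite (var_center f m).
by [].
Qed.

End Chain.
Lemma eig_psd (B : 'M[R]_n) : (forall x y, pi x * B x y = pi y * B y x) ->
  (forall lam, eigenvalue B lam -> 0 <= lam) -> forall h, 0 <= ip h (app B h).
Proof.
move=> rB eB h.
pose s x := Num.sqrt (pi x).
have sgt0 : forall x, 0 < s x by move=> x; rewrite sqrtr_gt0.
have sne0 : forall x, s x != 0 by move=> x; rewrite gt_eqF.
have sq : forall x, s x ^+ 2 = pi x by move=> x; rewrite sqr_sqrtr // ltW.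
pose S := \matrix_(x, y) (s x * B x y / s y).
have e1 : forall x y, s x * B x y / s y = pi x * B x y / (s x * s y).
  move=> x y; rewrite -sq; field; by rewrite !sne0.
have symS : S^T = S.
  apply/matrixP => x y; rewrite !mxE !e1 rB; congr (_ / _); exact: mulrC.
have eigS : forall lam, eigenvalue S lam -> 0 <= lam.
  move=> lam /eigenvalueP [v hv vnz]; apply: eB; apply/eigenvalueP.
  exists (\row_y (v 0 y * s y)).
    apply/rowP => y; rewrite !mxE.
    have := congr1 (fun A : 'rV[R]_n => A 0 y) hv; rewrite !mxE => e.
    transitivity (s y * \sum_(x < n) v 0 x * S x y).
      rewrite mulr_sumr; apply: eq_bigr => x _; rewrite !mxE; field; by rewrite sne0.
    by rewrite e; ring.
  apply: contraNneq vnz => h0; apply/eqP/rowP => y.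
  have := congr1 (fun A : 'rV[R]_n => A 0 y) h0; rewrite !mxE => /eqP.
  by rewrite mulf_eq0 (negPf (sne0 y)) orbF => /eqP ->.
have := real_sym_psd symS eigS (\row_x (s x * h x)).
suff -> : (\row_x (s x * h x) *m S *m (\row_x (s x * h x))^T) 0 0 = ip h (app B h) by [].
rewrite mxE /ip /app.
under eq_bigr => y _ do rewrite !mxE mulr_suml.
rewrite exchange_big /=; apply: eq_bigr => x _.
rewrite mulr_sumr; apply: eq_bigr => y _; rewrite !mxE -sq; field; by rewrite !sne0.
Qed.

Lemma mix_entry l (a : 'I_l -> R) (Q : 'I_l -> 'M[R]_n) x y :
  (\sum_(k < l) a k *: Q k) x y = \sum_(k < l) a k * Q k x y.
Proof. by rewrite summxE; apply: eq_bigr => k _; rewrite mxE. Qed.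

Lemma mix_tr l (a : 'I_l -> R) (Q : 'I_l -> 'M[R]_n) :
  (forall k, 0 < a k) -> \sum_(k < l) a k = 1 ->
  (forall k, is_transition (Q k) /\ reversible pi (Q k)) ->
  is_transition (\sum_(k < l) a k *: Q k) /\ reversible pi (\sum_(k < l) a k *: Q k).
Proof.
move=> apos asum hQ; split; first split.
- move=> x y; rewrite mix_entry sumr_ge0 // => k _.
  by case: (hQ k) => [[nn _] _]; rewrite mulr_ge0 ?nn ?(ltW (apos k)).
- move=> x; under eq_bigr => y _ do rewrite mix_entry.
  rewrite exchange_big /= -asum; apply: eq_bigr => k _.
  by rewrite -mulr_sumr; case: (hQ k) => [[_ ->] _]; rewrite mulr1.
- move=> x y; rewrite !mix_entry !mulr_sumr; apply: eq_bigr => k _.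
  by case: (hQ k) => _ r; rewrite mulrCA r mulrCA.
Qed.

Lemma mix_quad l (a : 'I_l -> R) (Q : 'I_l -> 'M[R]_n) h :
  ip h (app (\sum_(k < l) a k *: Q k) h) = \sum_(k < l) a k * ip h (app (Q k) h).
Proof.
rewrite /ip /app.
under eq_bigr => x _ do under eq_bigr => y _ do rewrite mix_entry mulr_suml.
under eq_bigr => x _ do rewrite exchange_big mulr_sumr.
rewrite exchange_big /=; apply: eq_bigr => k _.
rewrite mulr_sumr; apply: eq_bigr => x _; rewrite !mulr_sumr; apply: eq_bigr => y _ /=; ring.
Qed.

Lemma app_sub (A B : 'M[R]_n) h x : app (A - B) h x = app A h x - app B h x.
Proof. by rewrite /app -sumrB; apply: eq_bigr => y _; rewrite !mxE; ring. Qed.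

Lemma main_inner l (Ps Ps' : 'I_l -> 'M[R]_n) (a : 'I_l -> R) :
  (forall k, is_transition (Ps k) /\ reversible pi (Ps k)) ->
  (forall k, is_transition (Ps' k) /\ reversible pi (Ps' k)) ->
  (forall k, 0 < a k) -> \sum_(k < l) a k = 1 ->
  irreducible (\sum_(k < l) a k *: Ps k) ->
  irreducible (\sum_(k < l) a k *: Ps' k) ->
  (forall k (lam : R), eigenvalue (Ps k - Ps' k) lam -> 0 <= lam) ->
  efficiency_dominates pi (\sum_(k < l) a k *: Ps' k) (\sum_(k < l) a k *: Ps k).
Proof.
move=> hP hP' apos asum irr irr' heig f.
have [tP rP] := mix_tr apos asum hP.
have [tP' rP'] := mix_tr apos asum hP'.
set Pm := \sum_(k < l) a k *: Ps k in irr tP rP *.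
set Pm' := \sum_(k < l) a k *: Ps' k in irr' tP' rP' *.
have eigd : forall k h, 0 <= ip h (app (Ps k) h) - ip h (app (Ps' k) h).
  move=> k h.
  have -> : ip h (app (Ps k) h) - ip h (app (Ps' k) h) = ip h (app (Ps k - Ps' k) h).
    by rewrite -ipBr; apply: ip_ext => // x; rewrite app_sub.
  apply: eig_psd; last exact: heig.
  move=> x y; rewrite !mxE !mulrBr.
  by case: (hP k) => _ ->; case: (hP' k) => _ ->.
set m := \sum_(x < n) pi x * f x.
set f0 := fun x => f x - m.
have f00 : \sum_(x < n) pi x * f0 x = 0.
  rewrite /f0; under eq_bigr => x _ do rewrite mulrBr.
  by rewrite sumrB -mulr_suml pisum mul1r subrr.
rewrite (asym_center tP rP f m) (asym_center tP' rP' f m) -/f0.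
have [g hg] := poisson tP rP irr f00.
have [g' hg'] := poisson tP' rP' irr' f00.
rewrite (asym_formula tP rP irr hg f00) (asym_formula tP' rP' irr' hg' f00).
have h1 : ip g' g' - ip g' (app Pm g') <= ip g' f0.
  have e1 : ip g' f0 = ip g' g' - ip g' (app Pm' g').
    by rewrite -ipBr; apply: ip_ext => // x; rewrite hg'.
  have : 0 <= ip g' (app Pm g') - ip g' (app Pm' g').
    rewrite !mix_quad -sumrB sumr_ge0 // => k _.
    by rewrite -mulrBr mulr_ge0 ?(ltW (apos k)) ?eigd.
  lra.
have h2 : 0 <= ip g f0 - 2 * ip g' f0 + (ip g' g' - ip g' (app Pm g')).
  have := psdA tP rP (fun x => g x - g' x).
  have eA : ip (fun x => g x - g' x) (app Pm (fun x => g x - g' x)) =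
     ip g (app Pm g) - ip g (app Pm g') - ip g' (app Pm g) + ip g' (app Pm g').
    rewrite (@ip_ext _ (fun x => g x - g' x) _ (fun x => app Pm g x - app Pm g' x)) //; last exact: appB.
    rewrite ipBl !ipBr; ring.
  have eB : ip (fun x => g x - g' x) (fun x => g x - g' x) = ip g g - ip g g' - ip g' g + ip g' g'.
    rewrite ipBl !ipBr; ring.
  have c1 : ip g' g = ip g g' := ipC _ _.
  have c2 : ip g' (app Pm g) = ip g (app Pm g') by rewrite -(selfadj rP) ipC.
  have fa : ip g f0 = ip g g - ip g (app Pm g).
    by rewrite -ipBr; apply: ip_ext => // x; rewrite hg.
  have fb : ip g' f0 = ip g' g - ip g' (app Pm g).
    by rewrite -ipBr; apply: ip_ext => // x; rewrite hg.
  rewrite eA eB; lra.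
have : ip g' f0 <= ip g f0 by lra.
rewrite (ipC g f0) (ipC g' f0); lra.
Qed.

End Main.

Unset Implicit Arguments.

Theorem theorem5 (R : realType) (n : nat) (pi : 'I_n -> R) (l : nat)
  (Ps Ps' : 'I_l -> 'M[R]_n) (a : 'I_l -> R) :
  is_pos_distribution pi ->
  (forall k, is_transition (Ps k) /\ reversible pi (Ps k)) ->
  (forall k, is_transition (Ps' k) /\ reversible pi (Ps' k)) ->
  (forall k, 0 < a k) -> \sum_(k < l) a k = 1 ->
  irreducible (\sum_(k < l) a k *: Ps k) ->
  irreducible (\sum_(k < l) a k *: Ps' k) ->
  (forall k (lam : R), eigenvalue (Ps k - Ps' k) lam -> 0 <= lam) ->
  efficiency_dominates pi (\sum_(k < l) a k *: Ps' k) (\sum_(k < l) a k *: Ps k).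
Proof.
move=> [pipos pisum]; exact: main_inner.
Qed.
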